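(* Let $(\mathcal{M},g)$ be a globally hyperbolic Lorentzian spacetime and let $\{\Sigma_t\}_{t\in\mathbb{R}}$ be a foliation of $\mathcal{M}$ into spacelike Cauchy hypersurfaces. Let $\mathcal{H}$ be a Hilbert space, $\mathcal{D}\subset\mathcal{H}$ a dense subset, and let $\hat\psi:\mathcal{M}\to\mathcal{L}(\mathcal{D},\mathcal{H})$ and $\hat\pi:\mathcal{M}\to\mathcal{L}(\mathcal{D},\mathcal{H})$ be maps such that (1) $\hat\psi(x)\mathcal{D}\subset\mathcal{D}$ and $\hat\psi(x)^\dagger\mathcal{D}\subset\mathcal{D}$ for all $x\in\mathcal{M}$; (2) $\hat\pi(x)\mathcal{D}\subset\mathcal{D}$ and $\hat\pi(x)^\dagger\mathcal{D}\subset\mathcal{D}$ for all $x\in\mathcal{M}$; (3) for every $t\in\mathbb{R}$ the restriction $\hat\pi|_{\Sigma_t}$ is weakly continuous, i.e. for all $\ket{\phi},\ket{\psi}\in\mathcal{D}$ the map $x\in\Sigma_t\mapsto\bra{\phi}\hat\pi(x)\ket{\psi}$ is continuous. Then for every $t\in\mathbb{R}$ and every $x\in\Sigma_t$: $[\hat\psi(x),\hat\pi(y)]=0$ for all $y\in\Sigma_t\setminus\{x\}$ if and only if $[\hat\psi(x),\hat\pi(y)]=0$ for all $y\in\Sigma_t$; and $\{\hat\psi(x),\hat\pi(y)\}=0$ for all $y\in\Sigma_t\setminus\{x\}$ if and only if $\{\hat\psi(x),\hat\pi(y)\}=0$ for all $y\in\Sigma_t$, where all (anti)commutators are understood as operators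 on $\mathcal{D}$.
   Context: $\mathcal{L}(\mathcal{D},\mathcal{H})$ denotes the linear maps from the dense subspace $\mathcal{D}\subset\mathcal{H}$ into $\mathcal{H}$. $[A,B]=AB-BA$ and $\{A,B\}=AB+BA$. *)

(* Defs.v *)
From HB Require Import structures.
From mathcomp Require Import all_boot all_order all_algebra.
From mathcomp Require Import complex.
From mathcomp Require Import all_classical all_reals all_analysis.
Import numFieldTopology.Exports numFieldNormedType.Exports.
Import Order.TTheory GRing.Theory Num.Theory.

Set Implicit Arguments.
Unset Strict Implicit.
Unset Printing Implicit Defensive.

Local Open Scope ring_scope.
Local Open Scope classical_set_scope.
Local Open Scope complex_scope.

Definition Cc (R : realType) : numClosedFieldType := R[i].

(* ip is a (physicists') inner product on H: conjugate-linear in the first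
   argument, linear in the second, hermitian and positive definite. *)
Definition is_inner_product (R : realType) (H : lmodType (Cc R))
    (ip : H -> H -> Cc R) : Prop :=
  [/\ (forall (a : Cc R) (u v w : H), ip u (a *: v + w) = a * ip u v + ip u w),
      (forall u v : H, ip u v = (ip v u)^*),
      (forall u : H, 0 <= ip u u) &
      (forall u : H, ip u u = 0 -> u = 0)].

Definition sqnorm (R : realType) (H : lmodType (Cc R)) (ip : H -> H -> Cc R)
    (u : H) : Cc R := ip u u.

Definition ip_complete (R : realType) (H : lmodType (Cc R))
    (ip : H -> H -> Cc R) : Prop :=
  forall s : nat -> H,
    (forall e : R, 0 < e -> exists N : nat, forall m n : nat,
        (N <= m)%N -> (N <= n)%N -> `|sqnorm ip (s m - s n)| < e%:C) ->
    exists l : H, forall e : R, 0 < e -> exists N : nat, forall n : nat,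
        (N <= n)%N -> `|sqnorm ip (s n - l)| < e%:C.

Definition is_hilbert_space (R : realType) (H : lmodType (Cc R))
    (ip : H -> H -> Cc R) : Prop :=
  is_inner_product ip /\ ip_complete ip.

Definition dense_subspace (R : realType) (H : lmodType (Cc R))
    (ip : H -> H -> Cc R) (D : set H) : Prop :=
  [/\ D 0,
      (forall (a : Cc R) (u v : H), D u -> D v -> D (a *: u + v)) &
      (forall (h : H) (e : R), 0 < e ->
          exists2 d : H, D d & `|sqnorm ip (h - d)| < e%:C)].

(* A : H -> H represents an element of L(D,H): only its values on D matter,
   and it is linear there. *)
Definition linear_on (R : realType) (H : lmodType (Cc R)) (D : set H)
    (A : H -> H) : Prop :=
  forall (a : Cc R) (u v : H), D u -> D v -> A (a *: u + v) = a *: A u + A v.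

Definition maps_into (T : Type) (D : set T) (A : T -> T) : Prop :=
  forall u, D u -> D (A u).

(* A^† D ⊂ D, for A densely defined on D: every phi in D lies in the domain
   of the adjoint A^† (i.e. there is eta with <eta|u> = <phi|A u> for all u
   in D, and then A^† phi = eta), and A^† phi lies in D. *)
Definition adjoint_maps_into (R : realType) (H : lmodType (Cc R))
    (ip : H -> H -> Cc R) (D : set H) (A : H -> H) : Prop :=
  forall phi : H, D phi ->
    exists2 eta : H, D eta & forall u : H, D u -> ip eta u = ip phi (A u).

Definition commutator (R : realType) (H : lmodType (Cc R)) (A B : H -> H)
    (v : H) : H := A (B v) - B (A v).
Definition anticommutator (R : realType) (H : lmodType (Cc R)) (A B : H -> H)
    (v : H) : H := A (B v) + B (A v).
Definition commutator_vanishes_on (R : realType) (H : lmodType (Cc R))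
    (D : set H) (A B : H -> H) : Prop :=
  forall v : H, D v -> commutator A B v = 0.
Definition anticommutator_vanishes_on (R : realType) (H : lmodType (Cc R))
    (D : set H) (A B : H -> H) : Prop :=
  forall v : H, D v -> anticommutator A B v = 0.

Definition chart (R : realType) (M : topologicalType) (m : nat)
    (U : set M) (f : M -> 'rV[R]_m) : Prop :=
  open U /\ open (f @` U) /\
  exists g : 'rV[R]_m -> M,
    [/\ (forall x, U x -> g (f x) = x),
        (forall v, (f @` U) v -> f (g v) = v),
        {within U, continuous f} &
        {within f @` U, continuous g}].

Definition topological_manifold (R : realType) (M : topologicalType) (m : nat)
    : Prop :=
  hausdorff_space M /\
  forall x : M, exists U : set M, exists f : M -> 'rV[R]_m.+1,
      U x /\ chart U f.

Definition embedded_hypersurface (R : realType) (M : topologicalType) (m : nat)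
    (S : set M) : Prop :=
  forall x : M, S x -> exists U : set M, exists f : M -> 'rV[R]_m.+1,
    [/\ U x, chart U f &
        f @` (U `&` S) = (f @` U) `&` [set v | v ord0 ord_max = 0]].

Definition hypersurface_foliation (R : realType) (M : topologicalType)
    (m : nat) (Sigma : R -> set M) : Prop :=
  [/\ (forall x : M, exists t : R, Sigma t x),
      (forall s t : R, s != t -> Sigma s `&` Sigma t = set0) &
      (forall t : R, embedded_hypersurface R m (Sigma t))].

(* Main.v *)
Require Import Defs.
From HB Require Import structures.
From mathcomp Require Import all_boot all_order all_algebra.
From mathcomp Require Import complex.
From mathcomp Require Import all_classical all_reals all_analysis.
Import numFieldTopology.Exports numFieldNormedType.Exports.
Import Order.TTheory GRing.Theory Num.Theory.
Local Open Scope ring_scope.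
Local Open Scope classical_set_scope.
Set Implicit Arguments.
Unset Strict Implicit.
Lemma lim0 (R : realType) (M : topologicalType) (S : set M) (x : M)
  (g : M -> Cc R) : {within S, continuous g} -> S x ->
  (forall W, nbhs x W -> exists y, [/\ S y, y <> x & W y]) ->
  (forall y, S y -> y <> x -> g y = 0) -> g x = 0.
Proof.
move=> /subspace_continuousP cg Sx niso g0.
have := cg x Sx => /cvgrPdist_lt H.
apply/eqP; apply/negPn/negP => gx0.
have := H `|g x| ; rewrite normr_gt0 => /(_ gx0).
rewrite near_withinE => /niso [y [Sy yx]] /(_ Sy).
by rewrite /from_subspace (g0 y) // subr0 ltxx.
Qed.
Lemma noniso (R : realType) (M : topologicalType) (m : nat) (S : set M) (x : M) :
  embedded_hypersurface R m.+1 S -> S x ->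
  forall W, nbhs x W -> exists y, [/\ S y, y <> x & W y].
Proof.
move=> hS Sx W Wx.
have [U [f [Ux [oU [ofU [g [gf fg cf cg]]]] hU]]] := hS x Sx.
have fxS : (f @` U `&` [set v | v ord0 ord_max = 0]) (f x).
  by rewrite -hU; exists x.
have fxU : (f @` U) (f x) by case: fxS.
have := (proj1 (subspace_continuousP _ _) cg) (f x) fxU.
rewrite /from_subspace gf // => /(_ W Wx).
rewrite /= nbhs_simpl => HW.
have HU : nbhs (f x) (f @` U) by apply: open_nbhs_nbhs; split.
pose e : 'rV[R]_m.+2 := delta_mx 0 ord0.
pose h (s : R) := f x + s *: e.
have ch : h s @[s --> (0:R)] --> f x + 0 *: e.
  by apply: cvgD; [exact: cvg_cst| apply: cvgZl; exact: cvg_id].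
rewrite scale0r addr0 in ch.
have : \forall s \near (0:R)^', s != 0 /\ ((f @` U) (h s) /\ W (g (h s))).
  near=> s; split; first by near: s; exact: nbhs_dnbhs_neq.
  near: s; apply: nbhs_dnbhs; apply: (ch (fun v => (f @` U) v /\ W (g v))).
  by apply: filterS2 HU HW => v Uv /(_ Uv).
move=> /filter_ex [s [s0 [Uh Wh]]].
have : (f @` (U `&` S)) (h s).
  rewrite hU; split; first exact: Uh.
  move: fxS => [_ /= fx0].
  rewrite /h !mxE /= fx0 mulr0 addr0; reflexivity.
move=> [y [Uy Sy] fyh].
exists y; split => //; last by rewrite -(gf y Uy) fyh.
move=> yx; move: fyh; rewrite yx /h => /eqP.
rewrite -subr_eq0 opprD addNKr oppr_eq0 scaler_eq0 (negbTE s0) /= => /eqP/matrixP/(_ 0 ord0).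
rewrite !mxE /= => /eqP; rewrite oner_eq0.
Unshelve. all: by end_near.
Qed.

Local Open Scope complex_scope.
Section IP.
Variables (R : realType) (H : lmodType (Cc R)) (ip : H -> H -> Cc R).
Hypothesis hip : is_inner_product ip.

Lemma ip0r u : ip u 0 = 0.
Proof.
case: hip => lin _ _ _.
have := lin 1 u 0 0; rewrite scale1r addr0 mul1r => /eqP.
move/eqP => H0; apply: (@addrI _ (ip u 0)); by rewrite addr0 -H0.
Qed.

Lemma ipDr u v w : ip u (v + w) = ip u v + ip u w.
Proof. by case: hip => lin _ _ _; rewrite -[v]scale1r lin mul1r scale1r. Qed.

Lemma ipBr u v w : ip u (v - w) = ip u v - ip u w.
Proof.
case: hip => lin _ _ _.
have := lin (-1) u w v; rewrite scaleN1r mulN1r addrC => ->.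
by rewrite addrC.
Qed.

Lemma ipBl u v w : ip (u - v) w = ip u w - ip v w.
Proof.
case: hip => _ herm _ _.
by rewrite herm ipBr rmorphB /= -!herm.
Qed.
Lemma orth0 (D : set H) w :
  (forall (h : H) (e : R), 0 < e ->
          exists2 d : H, D d & `|sqnorm ip (h - d)| < e%:C) ->
  (forall d, D d -> ip d w = 0) -> w = 0.
Proof.
move=> dens orth; case: hip => _ herm pos def; apply: def.
have z0 : 0 <= ip w w := pos w.
case E: (ip w w) z0 => [a b]; rewrite lecE /= => /andP[/eqP b0 a0].
have zE : ip w w = a%:C by rewrite E b0.
have [->|apos] := eqVneq a 0; first by rewrite b0.
have {}apos : 0 < a by rewrite lt_def apos a0.
have [d Dd hd] := dens w a apos.
have ex : sqnorm ip (w - d) = ip w w + ip d d.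
  rewrite /sqnorm ipBl !ipBr (orth d Dd) (herm w d) (orth d Dd).
  by rewrite raddf0 !subr0 sub0r opprK.
rewrite ex ger0_norm ?addr_ge0 // in hd.
by move: hd; rewrite -zE gtrDl => /(le_lt_trans (pos d)); rewrite ltxx.
Qed.
End IP.
Close Scope complex_scope.
Unset Implicit Arguments.
Set Strict Implicit.

Theorem theorem1
  (R : realType)
  (* spacetime of dimension n.+2 >= 2, foliated by hypersurfaces Sigma t *)
  (M : topologicalType) (n : nat) (Sigma : R -> set M)
  (hM : topological_manifold R M n.+1)
  (hSigma : hypersurface_foliation n.+1 Sigma)
  (* Hilbert space H with inner product ip, dense subspace D *)
  (H : lmodType (Cc R)) (ip : H -> H -> Cc R) (D : set H)
  (hH : is_hilbert_space ip) (hD : dense_subspace ip D)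
  (* field operators psi, pi : M -> L(D,H) *)
  (psi pi : M -> H -> H)
  (hpsi_lin : forall x : M, linear_on D (psi x))
  (hpi_lin : forall x : M, linear_on D (pi x))
  (h1 : forall x : M, maps_into D (psi x) /\ adjoint_maps_into ip D (psi x))
  (h2 : forall x : M, maps_into D (pi x) /\ adjoint_maps_into ip D (pi x))
  (h3 : forall (t : R) (phi chi : H), D phi -> D chi ->
          {within Sigma t, continuous (fun y : M => ip phi (pi y chi))}) :
  forall (t : R) (x : M), Sigma t x ->
    ((forall y : M, Sigma t y -> y <> x ->
        commutator_vanishes_on D (psi x) (pi y)) <->
     (forall y : M, Sigma t y -> commutator_vanishes_on D (psi x) (pi y)))
    /\
    ((forall y : M, Sigma t y -> y <> x ->
        anticommutator_vanishes_on D (psi x) (pi y)) <->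
     (forall y : M, Sigma t y -> anticommutator_vanishes_on D (psi x) (pi y))).
Proof.
move=> t x Sx.
have [hip _] := hH.
have [_ _ dens] := hD.
have niso : forall W, nbhs x W -> exists y, [/\ Sigma t y, y <> x & W y].
  by case: hSigma => _ _ hS; exact: (noniso (hS t) Sx).
split; split => [Hc y Sy|Hc y Sy _]; last 1 [exact: Hc]; last 2 [exact: Hc].
- case: (pselect (y = x)) => [->|yx]; last exact: Hc.
  move=> v Dv; apply: (orth0 hip dens) => d Dd.
  have [eta Deta heta] := (h1 x).2 d Dd.
  pose G := fun y => ip eta (pi y v) - ip d (pi y (psi x v)).
  have cG : {within Sigma t, continuous G}.
    exact: (within_continuousB (h3 t eta v Deta Dv) (h3 t d _ Dd ((h1 x).1 v Dv))).
  have GE : forall y, G y = ip d (commutator (psi x) (pi y) v).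
    by move=> z; rewrite /G /commutator (ipBr hip) heta //; exact: (h2 z).1.
  rewrite -GE; apply: (lim0 cG Sx niso) => z Sz zx.
  by rewrite GE Hc // ip0r.
- case: (pselect (y = x)) => [->|yx]; last exact: Hc.
  move=> v Dv; apply: (orth0 hip dens) => d Dd.
  have [eta Deta heta] := (h1 x).2 d Dd.
  pose G := fun y => ip eta (pi y v) + ip d (pi y (psi x v)).
  have cG : {within Sigma t, continuous G}.
    exact: (within_continuousD (h3 t eta v Deta Dv) (h3 t d _ Dd ((h1 x).1 v Dv))).
  have GE : forall y, G y = ip d (anticommutator (psi x) (pi y) v).
    by move=> z; rewrite /G /anticommutator (ipDr hip) heta //; exact: (h2 z).1.
  rewrite -GE; apply: (lim0 cG Sx niso) => z Sz zx.
  by rewrite GE Hc // ip0r.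
Qed.
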